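(* Let $G$ be a finitely presented group with finite presentation $\mathcal{P}=\langle \mathcal{S}\mid\mathcal{W}\rangle$ whose Dehn function $f_G$ is polynomial (bounded above by a polynomial), and let $L^{st}_G$ be the standard word-length function on $G$ associated with the generating set $\mathcal{S}$. Then the map $$\alpha_2(G,L^{st}_G): H_2(G;\mathbb{Q})\to (H^2(G;\mathbb{Q}))^*\to (PH^2(G;\mathbb{Q}))^*$$ is an isomorphism.
   Context: Let $F$ be the free group on $\mathcal{S}$ with standard word-length $L_F$ (each generator has length $1$), and $F'\subset F$ the normal closure of $\mathcal{W}$, so $G=F/F'$. $L^{st}_G(g)=\min\{L_F(w): w\mapsto g\}$. For $y\in F'$, $\mathrm{Area}_{\mathcal{P}}(y)$ is the minimal $n$ such that $y=\bar w_1^{x_1}\cdots \bar w_n^{x_n}$ with $w_i^{\pm1}\in\mathcal{W}$, $x_i\in F$, $\bar w^x=x\bar w x^{-1}$. The Dehn function $f_{\mathcal P}:\mathbb{N}\to\mathbb{N}$ is the minimal function with $\mathrm{Area}_{\mathcal P}(y)\le f_{\mathcal P}(n)$ for all $y\in F'$ with $L_F(y)\le n$. p-bounded cohomology: for a group $G$ with word-length function $L$, $PH^*(G;\mathbb{Q})$ is the cohomology of the subcomplex of the (non-homogeneous) bar cochain complex $\mathrm{Hom}_G(C_*(EG;\mathbb{Q}),\mathbb{Q})$ consisting of cochains of polynomial growth, i.e. $G$-equivariant linear $\phi$ on $C_n(EG;\mathbb Q)=\mathbb{Q}[G][\{(1,g_1,\dots,g_n)\}]$ such that $|\phi(1,g_1,\dots,g_n)|\le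 C(1+\sum_i L(g_i))^k$ for some constants $C,k$. The inclusion of cochain complexes induces $PH^*(G;\mathbb Q)\to H^*(G;\mathbb Q)$; its dual composed with the universal-coefficient map $H_*(G;\mathbb Q)\to (H^*(G;\mathbb Q))^*$ is $\alpha_*(G,L)$. *)

(* Defs.v *)
From mathcomp Require Import all_boot all_order all_algebra all_fingroup.
Set Implicit Arguments. Unset Strict Implicit. Unset Printing Implicit Defensive.
Import Order.TTheory GRing.Theory Num.Theory.

(* A letter is (s, b) with b = true meaning s^{-1}.                         *)
Section FreeGroup.
Variable S : finType.

Definition letter := (S * bool)%type.
Definition word := seq letter.

Definition winv (w : word) : word := rev [seq (a.1, ~~ a.2) | a <- w].

Fixpoint fred (w : word) : word :=
  match w with
  | [::] => [::]
  | a :: w' =>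
      match fred w' with
      | b :: r' => if (a.1 == b.1) && (a.2 != b.2) then r' else a :: b :: r'
      | [::] => [:: a]
      end
  end.

Definition LF (w : word) : nat := size (fred w).

(* Area_P(y) <= N : y is equal in F to a product of at most N conjugates
   x r x^{-1} with r^{+-1} in W. *)
Definition area_le (W : seq word) (y : word) (N : nat) : Prop :=
  exists l : seq (word * word),
    [/\ size l <= N,
        all (fun p => (p.2 \in W) || (winv p.2 \in W)) l &
        fred (flatten [seq p.1 ++ p.2 ++ winv p.1 | p <- l]) = fred y].

(* y lies in F' = normal closure of W *)
Definition in_relators (W : seq word) (y : word) : Prop := exists N, area_le W y N.

(* The Dehn function f_P is bounded above by a polynomial:
   f_P(n) <= C (n+1)^k for all n, i.e. every y in F' with L_F(y) <= n
   has Area_P(y) <= C (n+1)^k. *)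
Definition dehn_poly_bounded (W : seq word) : Prop :=
  exists C k : nat, forall (n : nat) (y : word),
    in_relators W y -> LF y <= n -> area_le W y (C * (n.+1) ^ k).
End FreeGroup.

Local Open Scope group_scope.

Section Presentation.
Variables (S : finType) (G : groupType) (gen : S -> G).

Definition evalw (w : word S) : G :=
  foldr (fun a acc => (if a.2 then (gen a.1)^-1 else gen a.1) * acc) 1 w.

(* <S | W> is a presentation of G via gen: F -> G is onto, with kernel the
   normal closure F' of W; hence G = F / F'. *)
Definition presents (W : seq (word S)) : Prop :=
  (forall g : G, exists w, evalw w = g) /\
  (forall w, evalw w = 1 <-> in_relators W w).

Definition is_std_length (L : G -> nat) : Prop :=
  forall g : G,
    (exists w, evalw w = g /\ LF w = L g) /\
    (forall w, evalw w = g -> L g <= LF w).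
End Presentation.

(* Inhomogeneous bar complex of G with trivial Q coefficients, degrees <= 3. *)
Section Bar.
Variable G : groupType.
Local Open Scope ring_scope.

Definition chain1 := seq (G * rat).
Definition chain2 := seq ((G * G) * rat).
Definition chain3 := seq ((G * G * G) * rat).

Definition coef1 (c : chain1) (g : G) : rat := \sum_(p <- c | p.1 == g) p.2.
Definition coef2 (c : chain2) (x : G * G) : rat := \sum_(p <- c | p.1 == x) p.2.

Definition bnd2 (c : chain2) : chain1 :=
  flatten [seq [:: (p.1.2, p.2); ((p.1.1 * p.1.2)%g, - p.2); (p.1.1, p.2)] | p <- c].

Definition bnd3 (c : chain3) : chain2 :=
  flatten [seq let: (g, h, k) := p.1 in
               [:: ((h, k), p.2); (((g * h)%g, k), - p.2);
                   ((g, (h * k)%g), p.2); ((g, h), - p.2)] | p <- c].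

Definition is_cycle2 (c : chain2) : Prop := forall g, coef1 (bnd2 c) g = 0.
Definition is_boundary2 (c : chain2) : Prop :=
  exists d : chain3, forall x, coef2 (bnd3 d) x = coef2 c x.

(* cochains: G-equivariant cochains on EG = functions on G^n *)
Definition cobnd1 (psi : G -> rat) : G -> G -> rat :=
  fun g h => psi h - psi (g * h)%g + psi g.
Definition is_cocycle2 (phi : G -> G -> rat) : Prop :=
  forall g h k, phi h k - phi (g * h)%g k + phi g (h * k)%g - phi g h = 0.

Definition pgrowth1 (L : G -> nat) (psi : G -> rat) : Prop :=
  exists (C : rat) (k : nat), forall g, `|psi g| <= C * (1 + (L g)%:R) ^+ k.
Definition pgrowth2 (L : G -> nat) (phi : G -> G -> rat) : Prop :=
  exists (C : rat) (k : nat), forall g h,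
    `|phi g h| <= C * (1 + (L g + L h)%:R) ^+ k.

Definition pcocycle2 L phi := pgrowth2 L phi /\ is_cocycle2 phi.
Definition pcoboundary2 L (phi : G -> G -> rat) : Prop :=
  exists psi, pgrowth1 L psi /\ forall g h, phi g h = cobnd1 psi g h.

Definition pair2 (phi : G -> G -> rat) (c : chain2) : rat :=
  \sum_(p <- c) p.2 * phi p.1.1 p.1.2.

(* Q-linear functionals on PH^2(G;Q) = pZ^2 / pB^2, represented by functions
   on cochains that are Q-linear on pZ^2 and vanish on pB^2. *)
Definition PH2_functional L (Lam : (G -> G -> rat) -> rat) : Prop :=
  (forall (a : rat) phi psi, pcocycle2 L phi -> pcocycle2 L psi ->
     Lam (fun g h => a * phi g h + psi g h) = a * Lam phi + Lam psi) /\
  (forall phi, pcoboundary2 L phi -> Lam phi = 0).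

(* alpha_2(G,L) : H_2(G;Q) -> (PH^2(G;Q))^*, [c] |-> ([phi] |-> phi(c)),
   is an isomorphism (bijective), written out on representatives:
   injective  : a 2-cycle pairing to 0 with every p-bounded 2-cocycle is a
                2-boundary;
   surjective : every linear functional on PH^2 is pairing with a 2-cycle. *)
Definition alpha2_iso (L : G -> nat) : Prop :=
  (forall c : chain2, is_cycle2 c ->
     (forall phi, pcocycle2 L phi -> pair2 phi c = 0) -> is_boundary2 c) /\
  (forall Lam, PH2_functional L Lam ->
     exists c : chain2, is_cycle2 c /\
       forall phi, pcocycle2 L phi -> Lam phi = pair2 phi c).
End Bar.

(* Main.v *)
Require Import Defs.
From mathcomp Require Import all_boot all_order all_algebra all_fingroup.
From mathcomp Require Import ring lra zify.
From Stdlib Require Import FunctionalExtensionality Classical.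
Set Implicit Arguments. Unset Strict Implicit. Unset Printing Implicit Defensive.
Import Order.TTheory GRing.Theory Num.Theory.
Local Open Scope ring_scope.

Section Coef.
Variable T : eqType.
Definition cf (c : seq (T * rat)) (x : T) : rat := \sum_(p <- c | p.1 == x) p.2.
Definition pr (c : seq (T * rat)) (F : T -> rat) : rat := \sum_(p <- c) p.2 * F p.1.

Lemma cf_nil x : cf [::] x = 0. Proof. by rewrite /cf big_nil. Qed.
Lemma cf_cons y a c x : cf ((y, a) :: c) x = (if y == x then a else 0) + cf c x.
Proof. by rewrite /cf big_cons /=; case: (y == x); rewrite ?add0r. Qed.
Lemma cf_consE t c x : cf (t :: c) x = (if t.1 == x then t.2 else 0) + cf c x.
Proof. by case: t => y a; rewrite cf_cons. Qed.
Lemma cf_consI t c x : cf (t :: c) x = t.2 * (x == t.1)%:R + cf c x.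
Proof. by rewrite cf_consE eq_sym; case: (x == t.1); rewrite ?mulr1 ?mulr0. Qed.
Lemma cf_cat c1 c2 x : cf (c1 ++ c2) x = cf c1 x + cf c2 x.
Proof. by rewrite /cf big_cat. Qed.
Lemma pr_nil F : pr [::] F = 0. Proof. by rewrite /pr big_nil. Qed.
Lemma pr_cons y a c F : pr ((y, a) :: c) F = a * F y + pr c F.
Proof. by rewrite /pr big_cons. Qed.
Lemma pr_cat c1 c2 F : pr (c1 ++ c2) F = pr c1 F + pr c2 F.
Proof. by rewrite /pr big_cat. Qed.

Lemma pr_coef c (s : seq T) F : uniq s -> {subset map fst c <= s} ->
  pr c F = \sum_(x <- s) cf c x * F x.
Proof.
move=> us; elim: c => [|[y a] c IH] sub.
  by rewrite pr_nil big1_seq // => x _; rewrite cf_nil mul0r.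
rewrite pr_cons IH; last by move=> z zc; apply: sub; rewrite inE zc orbT.
have ys : y \in s by apply: sub; rewrite inE eqxx.
under [in RHS]eq_bigr do rewrite cf_cons mulrDl.
rewrite big_split /=; congr (_ + _).
rewrite (bigD1_seq y) //= eqxx big1_seq ?addr0 // => x /andP[xy _].
by rewrite eq_sym (negbTE xy) mul0r.
Qed.

Lemma pr_eq c1 c2 F : cf c1 =1 cf c2 -> pr c1 F = pr c2 F.
Proof.
move=> e; set s := undup (map fst c1 ++ map fst c2).
have us : uniq s by apply: undup_uniq.
rewrite (@pr_coef c1 s) ?(@pr_coef c2 s) //.
- by apply: eq_bigr => x _; rewrite e.
- by move=> z zc; rewrite mem_undup mem_cat zc orbT.
- by move=> z zc; rewrite mem_undup mem_cat zc.
Qed.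

Lemma pr_lin c F1 F2 (a : rat) : pr c (fun x => a * F1 x + F2 x) = a * pr c F1 + pr c F2.
Proof.
rewrite /pr big_distrr -big_split /=; apply: eq_bigr => p _.
by rewrite mulrDr mulrCA.
Qed.

Definition sc (a : rat) (c : seq (T * rat)) := [seq (p.1, a * p.2) | p <- c].
Lemma cf_sc a c x : cf (sc a c) x = a * cf c x.
Proof.
elim: c => [|[y b] c IH]; first by rewrite /sc /= !cf_nil mulr0.
by rewrite /= cf_cons IH cf_cons mulrDr; case: (y == x); rewrite ?mulr0.
Qed.
Lemma pr_sc a c F : pr (sc a c) F = a * pr c F.
Proof.
rewrite /pr big_map big_distrr; apply: eq_bigr => p _ /=; by rewrite mulrA.
Qed.

Lemma cf_notin c x : x \notin map fst c -> cf c x = 0.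
Proof.
move=> xn; rewrite /cf big1_seq // => p /andP[/eqP px pc].
by move: xn; rewrite -px (map_f fst pc).
Qed.
End Coef.

Section Words.
Variables (S : finType) (G : groupType) (gen : S -> G).
Local Notation ev := (evalw gen).
Implicit Types (u v w : word S) (a b : letter S).

Definition xa (a : letter S) : G := if a.2 then ((gen a.1)^-1)%g else gen a.1.
Definition flip (a : letter S) : letter S := (a.1, ~~ a.2).

Lemma ev_cons a w : ev (a :: w) = (xa a * ev w)%g.
Proof. by []. Qed.
Lemma ev_nil : ev [::] = 1%g. Proof. by []. Qed.
Lemma ev_cat u v : ev (u ++ v) = (ev u * ev v)%g.
Proof. by elim: u => [|a u IH] /=; rewrite ?mul1g // IH mulgA. Qed.

Lemma winv_cons a w : winv (a :: w) = winv w ++ [:: flip a].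
Proof. by rewrite /winv /= rev_cons -cats1. Qed.
Lemma winv_nil : winv ([::] : word S) = [::]. Proof. by []. Qed.
Lemma winv_cat u v : winv (u ++ v) = winv v ++ winv u.
Proof. by rewrite /winv map_cat rev_cat. Qed.
Lemma winvK w : winv (winv w) = w.
Proof.
rewrite /winv map_rev revK -map_comp map_id_in // => -[s b] _ /=.
by rewrite negbK.
Qed.
Lemma size_winv w : size (winv w) = size w.
Proof. by rewrite /winv size_rev size_map. Qed.

Lemma xa_flip a : xa (flip a) = ((xa a)^-1)%g.
Proof. by case: a => s [] /=; rewrite /xa /= ?invgK. Qed.

Lemma ev_winv w : ev (winv w) = ((ev w)^-1)%g.
Proof.
elim: w => [|a w IH]; first by rewrite /= invg1.
by rewrite winv_cons ev_cat IH ev_cons ev_nil xa_flip mulg1 ev_cons invgM.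
Qed.

Lemma fred_cancel (a b : letter S) : (a.1 == b.1) && (a.2 != b.2) -> (xa a * xa b = 1)%g.
Proof.
case: a b => [s x] [t y] /andP[/= /eqP <-]; rewrite /xa /=.
by case: x; case: y => //= _; rewrite ?mulVg ?mulgV.
Qed.

Lemma ev_fred w : ev (fred w) = ev w.
Proof.
elim: w => [|a w IH] //=.
case E: (fred w) => [|b r]; first by rewrite /= -IH E.
case: ifP => C; last by rewrite /= -IH E.
by rewrite -IH E /= mulgA fred_cancel // mul1g.
Qed.

Lemma size_fred w : (size (fred w) <= size w)%N.
Proof.
elim: w => [|a w IH] //=.
case E: (fred w) => [|b r] //=; rewrite E in IH.
case: ifP => _ /=; last by [].
by apply: leq_trans (leqnSn _) _; apply: leq_trans (leqnSn _) _.
Qed.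

Definition gterm (p : G) (a : letter S) : (G * G) * rat :=
  if a.2 then ((p * (gen a.1)^-1, gen a.1)%g, -1) else ((p, gen a.1), 1).
Fixpoint gam (p : G) (w : word S) : chain2 G :=
  match w with [::] => [::] | a :: w' => gterm p a :: gam (p * xa a)%g w' end.

Lemma gam_cat p u v : gam p (u ++ v) = gam p u ++ gam (p * ev u)%g v.
Proof.
elim: u p => [|a u IH] p /=; first by rewrite mulg1.
by rewrite IH mulgA.
Qed.

Lemma size_gam p w : size (gam p w) = size w.
Proof. by elim: w p => [|a w IH] p //=; rewrite IH. Qed.

Lemma gam_winv p w x : cf (gam (p * ev w)%g (winv w)) x = - cf (gam p w) x.
Proof.
elim: w p => [|a w IH] p; first by rewrite /= cf_nil oppr0.
rewrite winv_cons gam_cat cf_cat ev_cons mulgA IH ev_winv mulgK.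
rewrite /= cf_consE [in RHS]cf_consE !cf_nil !addr0 opprD addrC; congr (_ + _).
case: a => s [] /=; rewrite /gterm /xa /= ?mulgK;
by case: ifP => _; rewrite ?opprK ?oppr0.
Qed.

Lemma gam_fred p w x : cf (gam p (fred w)) x = cf (gam p w) x.
Proof.
elim: w p => [|a w IH] p //=.
case E: (fred w) => [|b r].
  by rewrite /= !cf_consE -IH E.
case: ifP => C; last by rewrite /= !cf_consE -IH E /= !cf_consE.
rewrite cf_consE -IH E /= !cf_consE -mulgA (fred_cancel C) mulg1 addrA.
suff -> : (if (gterm p a).1 == x then (gterm p a).2 else 0) +
  (if (gterm (p * xa a)%g b).1 == x then (gterm (p * xa a)%g b).2 else 0) = 0 by rewrite add0r.
move: C; clear E IH; case: a b => [s u] [t v] /andP[/= /eqP <-].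
rewrite /gterm /xa /=; case: u; case: v => //= _; rewrite ?mulgK ?mulgV ?mulg1;
by case: ifP => _; rewrite ?addrN ?addNr ?addr0.
Qed.

Definition expc (w : word S) : chain1 G :=
  [seq (gen a.1, if a.2 then -1 else 1) | a <- w].

Lemma bnd2_cons (t : (G * G) * rat) (c : chain2 G) : bnd2 (t :: c) =
  [:: (t.1.2, t.2); ((t.1.1 * t.1.2)%g, - t.2); (t.1.1, t.2)] ++ bnd2 c.
Proof. by []. Qed.
Lemma bnd2_cat (c1 c2 : chain2 G) : bnd2 (c1 ++ c2) = bnd2 c1 ++ bnd2 c2.
Proof. by rewrite /bnd2 map_cat flatten_cat. Qed.
Lemma bnd2_nil : bnd2 ([::] : chain2 G) = [::]. Proof. by []. Qed.

Lemma bnd_gam p w g : cf (bnd2 (gam p w)) g =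
  cf (expc w) g - (g == p * ev w)%g%:R + (g == p)%:R.
Proof.
elim: w p => [|a w IH] p.
  by rewrite /= cf_nil mulg1 sub0r addNr.
rewrite /= bnd2_cons cf_cat IH /= !cf_consE cf_nil addr0 mulgA.
case: a => s [] /=; rewrite /gterm /xa /= ?mulgK ?mulgVK.
- rewrite !(eq_sym _ g); case: (g =P gen s); case: (g =P p);
  case: (g =P (p * (gen s)^-1)%g); case: (g =P (p * (gen s)^-1 * ev w)%g);
  move=> *; rewrite /= ?add0r ?addr0; ring.
- rewrite !(eq_sym _ g); case: (g =P gen s); case: (g =P p);
  case: (g =P (p * gen s)%g); case: (g =P (p * gen s * ev w)%g);
  move=> *; rewrite /= ?add0r ?addr0; ring.
Qed.
End Words.

Section Bnd.
Variable G : groupType.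
Implicit Types (f g : G * G -> rat) (d : chain3 G) (c : chain2 G).

Definition isB f := exists d : chain3 G, forall x, cf (bnd3 d) x = f x.

Lemma bnd3_cat d1 d2 : bnd3 (d1 ++ d2) = bnd3 d1 ++ bnd3 d2.
Proof. by rewrite /bnd3 map_cat flatten_cat. Qed.

Lemma cf_bnd3_1 (a b c : G) (r : rat) x : cf (bnd3 [:: ((a, b, c), r)]) x =
  r * ((x == (b, c))%:R - (x == ((a * b)%g, c))%:R + (x == (a, (b * c)%g))%:R - (x == (a, b))%:R).
Proof.
rewrite /bnd3 /= ?cats0 !cf_consE cf_nil /= !(eq_sym _ x).
case: (x == (b, c)); case: (x == ((a * b)%g, c)); case: (x == (a, (b * c)%g));
case: (x == (a, b)); rewrite /=; ring.
Qed.

Lemma cf_bnd3_cons t d x : cf (bnd3 (t :: d)) x = cf (bnd3 [:: t]) x + cf (bnd3 d) x.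
Proof. by rewrite -cf_cat -bnd3_cat. Qed.

Lemma isB0 : isB (fun _ => 0).
Proof. by exists [::]; move=> x; rewrite /bnd3 /= cf_nil. Qed.

Lemma isB_ext f g : f =1 g -> isB f -> isB g.
Proof. by move=> e [d hd]; exists d => x; rewrite hd e. Qed.

Lemma isB_add f g : isB f -> isB g -> isB (fun x => f x + g x).
Proof. by move=> [d1 h1] [d2 h2]; exists (d1 ++ d2) => x; rewrite bnd3_cat cf_cat h1 h2. Qed.

Lemma isB_scale (a : rat) f : isB f -> isB (fun x => a * f x).
Proof.
move=> [d h]; exists (sc a d) => x; rewrite -h.
elim: d {h} => [|[[[p q] r] b] d IH]; first by rewrite /= /bnd3 /= !cf_nil mulr0.
rewrite /= cf_bnd3_cons IH [in RHS]cf_bnd3_cons mulrDr; congr (_ + _).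
by rewrite !cf_bnd3_1 mulrA.
Qed.

Lemma isB_opp f : isB f -> isB (fun x => - f x).
Proof. by move=> h; apply: isB_ext (isB_scale (-1) h) => x; rewrite mulN1r. Qed.

Lemma isB_sub f g : isB f -> isB g -> isB (fun x => f x - g x).
Proof. by move=> hf hg; apply: isB_add hf (isB_opp hg). Qed.

Lemma isB_bnd3 d : isB (cf (bnd3 d)).
Proof. by exists d. Qed.

Lemma isB_sum (I : Type) (s : seq I) (F : I -> G * G -> rat) :
  (forall i, isB (F i)) -> isB (fun x => \sum_(i <- s) F i x).
Proof.
move=> h; elim: s => [|i s IH].
  by apply: isB_ext isB0 => x; rewrite big_nil.
by apply: isB_ext (isB_add (h i) IH) => x; rewrite big_cons.
Qed.

Lemma pair2E phi c : pair2 phi c = pr c (fun x => phi x.1 x.2).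
Proof. by []. Qed.

Lemma pair_bnd3 phi d : is_cocycle2 phi -> pr (bnd3 d) (fun x => phi x.1 x.2) = 0.
Proof.
move=> hc; elim: d => [|[[[a b] c] r] d IH]; first by rewrite /bnd3 /= pr_nil.
rewrite -cat1s bnd3_cat pr_cat IH addr0 /bnd3 /= !pr_cons pr_nil /=.
have := hc a b c; move=> e.
rewrite addr0; transitivity (r * (phi b c - phi (a * b)%g c + phi a (b * c)%g - phi a b)); [ring | by rewrite e mulr0].
Qed.

Lemma pair_hom phi c1 c2 : is_cocycle2 phi ->
  isB (fun x => cf c1 x - cf c2 x) -> pair2 phi c1 = pair2 phi c2.
Proof.
move=> hc [d hd]; rewrite !pair2E.
rewrite (@pr_eq _ c1 (bnd3 d ++ c2)); last by move=> x; rewrite cf_cat hd addrNK.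
by rewrite pr_cat pair_bnd3 // add0r.
Qed.
End Bnd.

Section Paths.
Variables (S : finType) (G : groupType) (gen : S -> G).
Local Notation ev := (evalw gen).
Local Notation gam := (gam gen).

Lemma gam_shift (q p : G) (w : word S) : isB (fun x => cf (gam (q * p)%g w) x - cf (gam p w) x
   - (x == (q, (p * ev w)%g))%:R + (x == (q, p))%:R).
Proof.
elim: w p => [|a w IH] p.
  by eapply isB_ext; last exact: isB0; move=> x /=; rewrite !cf_nil mulg1; ring.
case: a => s [].
- apply: isB_ext (isB_add (IH (p * (gen s)^-1)%g) (isB_bnd3 [:: ((q, (p * (gen s)^-1)%g, gen s), 1)])) => x.
  rewrite cf_bnd3_1 /= !cf_consI /gterm /xa /= !mulgA mulgVK; ring.
- apply: isB_ext (isB_add (IH (p * gen s)%g) (isB_bnd3 [:: ((q, p, gen s), -1)])) => x.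
  rewrite cf_bnd3_1 /= !cf_consI /gterm /xa /= !mulgA; ring.
Qed.
End Paths.

Section LA.
Variable n : nat.
Implicit Types (v w : 'rV[rat]_n).

Definition dotr v w : rat := (v *m w^T) 0 0.

Lemma dotrE v w : dotr v w = \sum_(j < n) v 0 j * w 0 j.
Proof. by rewrite /dotr mxE; apply: eq_bigr => j _; rewrite mxE. Qed.

Lemma dotrC v w : dotr v w = dotr w v.
Proof. by rewrite !dotrE; apply: eq_bigr => j _; rewrite mulrC. Qed.

Definition subsp (P : 'rV[rat]_n -> Prop) :=
  P 0 /\ forall (a : rat) v w, P v -> P w -> P (a *: v + w).

Lemma FB_aux (P : 'rV[rat]_n -> Prop) : subsp P -> forall d (M : 'M[rat]_n),
  (n - \rank M <= d)%N -> (forall w, (w <= M)%MS -> P w) ->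
  exists M' : 'M[rat]_n, forall w, P w <-> (w <= M')%MS.
Proof.
move=> [P0 Pc]; elim=> [|d IH] M hd hM.
  exists M => w; split => [_|]; last exact: hM.
  have Mfull : \rank M = n.
    have := rank_leq_col M; move: hd; lia.
  by rewrite (submx_full w) // /row_full Mfull.
case: (classic (forall w, P w -> (w <= M)%MS)) => [h|].
  by exists M => w; split; [exact: h | exact: hM w].
move=> H0; have [w Hw] := not_all_ex_not _ _ H0; have [Pw nwM] := imply_to_and _ _ Hw; clear H0 Hw.
apply: (IH (M + w)%MS).
  have lt : (\rank M < \rank (M + w)%MS)%N.
    apply: rank_ltmx; rewrite ltmxE addsmxSl /=; apply/negP => h.
    by apply: nwM; apply: submx_trans h; exact: addsmxSr.
  have := rank_leq_col (M + w)%MS; move: hd lt; lia.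
move=> w' /sub_addsmxP [[u1 u2] /= ->].
have /sub_rVP [a ->] : (u2 *m w <= w)%MS by apply: submxMl.
rewrite addrC; apply: Pc => //; apply: hM; exact: submxMl.
Qed.

Lemma FB (P : 'rV[rat]_n -> Prop) : subsp P ->
  exists M : 'M[rat]_n, forall w, P w <-> (w <= M)%MS.
Proof.
move=> hP; apply: (FB_aux hP (d := n) (M := 0)); first exact: leq_subr.
move=> w; rewrite submx0 => /eqP ->; exact: hP.1.
Qed.

Lemma rV_nonzero (x : 'rV[rat]_n) : x != 0 -> exists j, x 0 j != 0.
Proof.
move=> hx; apply: NNPP => hn; move/eqP: hx; apply; apply/matrixP => i j.
rewrite (ord1 i) mxE; apply/eqP; apply: negbNE; apply/negP => hj.
by apply: hn; exists j.
Qed.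

Lemma sep (P : 'rV[rat]_n -> Prop) v : subsp P -> ~ P v ->
  exists u, (forall w, P w -> dotr w u = 0) /\ dotr v u != 0.
Proof.
move=> hP nv; have [M hM] := FB hP.
have : v *m cokermx M != 0 by rewrite -submxE; apply/negP => /hM.
case/rV_nonzero => j hj.
have key : forall w, dotr w (\row_i (cokermx M) i j) = (w *m cokermx M) 0 j.
  by move=> w; rewrite dotrE mxE; apply: eq_bigr => i _; rewrite mxE.
exists (\row_i (cokermx M) i j); split; last by rewrite key.
by move=> w /hM; rewrite submxE => /eqP h; rewrite key h mxE.
Qed.
End LA.

Lemma trmx11 (a : 'M[rat]_1) : a = 0 -> a 0 0 = 0.
Proof. by move=> ->; rewrite mxE. Qed.

Lemma fredholm r p (E : 'M[rat]_(r, p)) (b : 'cV[rat]_r) :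
  (forall a : 'rV[rat]_r, a *m E = 0 -> a *m b = 0) -> exists x : 'cV[rat]_p, E *m x = b.
Proof.
move=> h; case: (boolP (b^T <= E^T)%MS) => hb.
  case/submxP: hb => D eD; exists D^T.
  by rewrite -[E]trmxK -trmx_mul -eD trmxK.
exfalso; move: hb; rewrite submxE => /rV_nonzero [j hj].
set K := cokermx E^T.
have hE : (\row_i K i j) *m E = 0.
  apply/matrixP => i l; rewrite (ord1 i) !mxE.
  have := congr1 (fun X : 'M[rat]_(p, r) => X l j) (mulmx_coker E^T); rewrite !mxE => e.
  transitivity (\sum_j0 E^T l j0 * cokermx E^T j0 j); last exact: e.
  by apply: eq_bigr => i' _; rewrite !mxE mulrC.
have := h _ hE; move/trmx11.
rewrite (_ : ((\row_i K i j) *m b) 0 0 = (b^T *m K) 0 j) => [e|]; first by rewrite e eqxx in hj.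
by rewrite !mxE; apply: eq_bigr => i _; rewrite !mxE mulrC.
Qed.

Lemma rep n (U N : 'rV[rat]_n -> Prop) (lam : 'rV[rat]_n -> rat) :
  subsp U -> subsp N ->
  (forall (a : rat) v w, U v -> U w -> lam (a *: v + w) = a * lam v + lam w) ->
  (forall v, U v -> (forall x, N x -> dotr x v = 0) -> lam v = 0) ->
  exists x, N x /\ forall v, U v -> lam v = dotr x v.
Proof.
move=> hU hN hlin hker.
have [A hA] := FB hU; have [B hB] := FB hN.
have lam0 : lam 0 = 0.
  have := hlin 1 0 0 hU.1 hU.1; rewrite scale1r addr0 mul1r => e.
  by apply: (addrI (lam 0)); rewrite addr0 -e.
set t : 'cV[rat]_n := \col_i lam (row i A).
have lamA : forall c : 'rV[rat]_n, lam (c *m A) = (c *m t) 0 0.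
  move=> c; rewrite mulmx_sum_row mxE.
  have : U (\sum_(i < n) c 0 i *: row i A) /\
         lam (\sum_(i < n) c 0 i *: row i A) = \sum_(i < n) c 0 i * t i 0.
    elim/big_rec2: _ => [|i y1 y2 _ [Uy1 ey]].
      by split; [exact: hU.1 | exact: lam0].
    have Ur : U (row i A) by apply/hA; exact: row_sub.
    split; first exact: hU.2.
    by rewrite hlin // ey mxE.
  by case.
have [y hy] : exists y : 'cV[rat]_n, (A *m B^T) *m y = t.
  apply: fredholm => a ha.
  have Uv : U (a *m A) by apply/hA; exact: submxMl.
  have := hker _ Uv; rewrite lamA => hl.
  apply/matrixP => i j; rewrite (ord1 i) (ord1 j) [in RHS]mxE.
  apply: hl => x /hB /submxP [d ->].
  by rewrite dotrC /dotr trmx_mul mulmxA -(mulmxA a) ha !mul0mx mxE.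
exists (y^T *m B); split; first by apply/hB; exact: submxMl.
move=> v /hA /submxP [c ->].
by rewrite lamA dotrC /dotr trmx_mul trmxK -hy !mulmxA.
Qed.

Lemma cf_flatten (T : eqType) (I : Type) (s : seq I) (F : I -> seq (T * rat)) x :
  cf (flatten [seq F i | i <- s]) x = \sum_(i <- s) cf (F i) x.
Proof.
elim: s => [|i s IH]; first by rewrite big_nil /= cf_nil.
by rewrite /= cf_cat IH big_cons.
Qed.

Lemma leq_expl m n e : (m <= n)%N -> (m ^ e <= n ^ e)%N.
Proof. by move=> h; elim: e => [|e IH] //; rewrite !expnS leq_mul. Qed.

Lemma ler_expr (x y : rat) e : 0 <= x -> x <= y -> x ^+ e <= y ^+ e.
Proof. by move=> hx hxy; apply: lerXn2r; rewrite ?nnegrE // (le_trans hx hxy). Qed.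

Lemma ler_expn (x : rat) e e' : 1 <= x -> (e <= e')%N -> x ^+ e <= x ^+ e'.
Proof.
move=> hx hee; rewrite -(subnKC hee) exprD -{1}(mulr1 (x ^+ e)).
apply: ler_wpM2l; first by apply: exprn_ge0; apply: le_trans hx.
exact: exprn_ege1.
Qed.

Lemma sum_le_size (T : eqType) (s : seq T) (F : T -> rat) M :
  (forall t, t \in s -> F t <= M) -> \sum_(t <- s) F t <= (size s)%:R * M.
Proof.
elim: s => [|t s IH] h; first by rewrite big_nil mul0r.
rewrite big_cons /= -addn1 natrD mulrDl mul1r addrC; apply: lerD.
  by apply: IH => u us; apply: h; rewrite inE us orbT.
by apply: h; rewrite inE eqxx.
Qed.

Lemma Cst_ge0 (Cst x y : rat) : 0 < x -> `|y| <= Cst * x -> 0 <= Cst.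
Proof.
move=> hx h; have : 0 <= Cst * x by apply: le_trans h.
by rewrite pmulr_lge0.
Qed.

Section Pres.
Variables (S : finType) (W : seq (word S)) (G : groupType) (gen : S -> G) (L : G -> nat).
Hypothesis hpres : presents gen W.
Hypothesis hstd : is_std_length gen L.
Variables (C k : nat).
Hypothesis hdehn : forall (n : nat) (y : word S),
    in_relators W y -> (LF y <= n)%N -> area_le W y (C * (n.+1) ^ k).

Local Notation ev := (evalw gen).
Local Notation gam := (gam gen).
Implicit Types (u v w : word S) (g h : G).

Lemma rel_ev r : r \in W -> ev r = 1%g.
Proof.
move=> rW; apply/(hpres.2 r); exists 1%N; exists [:: ([::], r)]; split => //=.
  by rewrite rW.
by rewrite winv_nil !cats0.
Qed.

Lemma wg_ex g : exists w, (ev w == g) && (size w == L g).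
Proof.
have [[w [ew lw]] _] := hstd g.
by exists (fred w); rewrite ev_fred ew eqxx -lw /LF eqxx.
Qed.
Definition wg g : word S := xchoose (wg_ex g).
Lemma wgP g : ev (wg g) = g /\ size (wg g) = L g.
Proof. by have /andP[/eqP -> /eqP ->] := xchooseP (wg_ex g). Qed.
Lemma ev_wg g : ev (wg g) = g. Proof. by case: (wgP g). Qed.
Lemma size_wg g : size (wg g) = L g. Proof. by case: (wgP g). Qed.

Lemma L_le w : (L (ev w) <= size w)%N.
Proof.
have [_ h] := hstd (ev w); apply: leq_trans (h w erefl) _; exact: size_fred.
Qed.

Lemma L_mul g h : (L (g * h)%g <= L g + L h)%N.
Proof.
have := L_le (wg g ++ wg h); rewrite ev_cat !ev_wg size_cat !size_wg; exact.
Qed.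

Definition yw g h : word S := wg g ++ wg h ++ winv (wg (g * h)%g).
Lemma ev_yw g h : ev (yw g h) = 1%g.
Proof. by rewrite /yw !ev_cat ev_winv !ev_wg mulgA mulgV. Qed.

Definition flat (l : seq (word S * word S)) : word S :=
  flatten [seq p.1 ++ p.2 ++ winv p.1 | p <- l].
Definition isrel (p : word S * word S) : bool := (p.2 \in W) || (winv p.2 \in W).

Definition Nb g h : nat := C * (LF (yw g h)).+1 ^ k.

Lemma dec_ex g h : exists l, [&& (size l <= Nb g h)%N, all isrel l & fred (flat l) == fred (yw g h)].
Proof.
have hr : in_relators W (yw g h) by apply/(hpres.2 _); exact: ev_yw.
have [l [l1 l2 l3]] := hdehn hr (leqnn _).
by exists l; rewrite l1 l2 /flat l3 eqxx.
Qed.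
Definition dec g h := xchoose (dec_ex g h).
Lemma decP g h : [/\ (size (dec g h) <= Nb g h)%N, all isrel (dec g h) &
   fred (flat (dec g h)) = fred (yw g h)].
Proof. by have /and3P[a b /eqP c] := xchooseP (dec_ex g h). Qed.

Local Notation m := (size W).
Definition Wj (j : 'I_m) := nth [::] W j.
Definition sgnv (p : word S * word S) : 'rV[rat]_m :=
  if p.2 \in W then \row_j (index p.2 W == j)%:R else - \row_j (index (winv p.2) W == j)%:R.
Definition cnt (l : seq (word S * word S)) : 'rV[rat]_m := \sum_(p <- l) sgnv p.

Definition GamV (a : 'rV[rat]_m) : chain2 G :=
  flatten [seq sc (a 0 j) (gam 1%g (Wj j)) | j <- index_enum 'I_m].

Lemma cf_GamV a x : cf (GamV a) x = \sum_(j < m) a 0 j * cf (gam 1%g (Wj j)) x.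
Proof. by rewrite /GamV cf_flatten; apply: eq_bigr => j _; rewrite cf_sc. Qed.

Lemma cf_GamV_add a b x : cf (GamV (a + b)) x = cf (GamV a) x + cf (GamV b) x.
Proof. by rewrite !cf_GamV -big_split; apply: eq_bigr => j _; rewrite mxE mulrDl. Qed.
Lemma cf_GamV_scale (r : rat) a x : cf (GamV (r *: a)) x = r * cf (GamV a) x.
Proof. by rewrite !cf_GamV big_distrr; apply: eq_bigr => j _; rewrite !mxE -mulrA. Qed.
Lemma cf_GamV_sum (I : Type) (s : seq I) (F : I -> 'rV[rat]_m) x :
  cf (GamV (\sum_(i <- s) F i)) x = \sum_(i <- s) cf (GamV (F i)) x.
Proof.
elim: s => [|i s IH]; first by rewrite !big_nil cf_GamV big1 // => j _; rewrite mxE mul0r.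
by rewrite !big_cons cf_GamV_add IH.
Qed.

Lemma cf_GamV_delta (i : nat) x : (i < m)%N ->
  cf (GamV (\row_j (i == j)%:R)) x = cf (gam 1%g (nth [::] W i)) x.
Proof.
move=> im; rewrite cf_GamV (bigD1 (Ordinal im)) //= mxE eqxx mul1r big1 ?addr0 //.
move=> j jn; rewrite mxE; case: eqP => [ij|]; last by rewrite mul0r.
by case/negP: jn; apply/eqP/val_inj; rewrite /= ij.
Qed.

Lemma gam_winv1 w x : ev w = 1%g -> cf (gam 1%g (winv w)) x = - cf (gam 1%g w) x.
Proof. by move=> e; rewrite -(gam_winv gen 1%g w x) e mulg1. Qed.

Lemma cf_sgnv p x : isrel p -> cf (GamV (sgnv p)) x = cf (gam 1%g p.2) x.
Proof.
rewrite /isrel /sgnv; case: ifP => [pW _|pW /= iW].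
  by rewrite cf_GamV_delta ?index_mem // nth_index.
rewrite -scaleN1r cf_GamV_scale cf_GamV_delta ?index_mem // nth_index //.
have e : cf (gam 1%g p.2) x = - cf (gam 1%g (winv p.2)) x.
  by rewrite -{1}(winvK p.2) gam_winv1 // rel_ev.
rewrite e; ring.
Qed.

Lemma gam_flat l : all isrel l ->
  isB (fun x => cf (gam 1%g (flat l)) x - cf (GamV (cnt l)) x).
Proof.
elim: l => [|p l IH] /=.
  by move=> _; eapply isB_ext; last exact: isB0; move=> y; rewrite /cnt big_nil /= cf_nil
     cf_GamV big1 ?subr0 // => j _; rewrite mxE mul0r.
case/andP=> hp hl.
have ep2 : ev p.2 = 1%g.
  by move: hp; rewrite /isrel; case/orP => [/rel_ev //|/rel_ev]; rewrite ev_winv => /eqP;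
     rewrite invg_eq1 => /eqP.
have eb : ev (p.1 ++ p.2 ++ winv p.1) = 1%g by rewrite !ev_cat ep2 mul1g ev_winv mulgV.
have hs := gam_shift gen (ev p.1) 1%g p.2.
eapply isB_ext; last exact: (isB_add (IH hl) hs).
move=> y; rewrite /flat /= gam_cat -/(flat l) eb mul1g cf_cat !gam_cat !cf_cat.
rewrite /cnt big_cons cf_GamV_add -/(cnt l) cf_sgnv // mul1g ep2 mulg1 !mulg1.
have e2 : cf (gam (ev p.1) (winv p.1)) y = - cf (gam 1%g p.1) y.
  by rewrite -(gam_winv gen 1%g p.1 y) mul1g.
rewrite e2; ring.
Qed.

Lemma gam_winv' w x : cf (gam (ev w) (winv w)) x = - cf (gam 1%g w) x.
Proof. by rewrite -(gam_winv gen 1%g w x) mul1g. Qed.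

Lemma gam_yw g h x : cf (gam 1%g (yw g h)) x =
  cf (gam 1%g (wg g)) x + cf (gam g (wg h)) x - cf (gam 1%g (wg (g * h)%g)) x.
Proof.
rewrite /yw !gam_cat !cf_cat !ev_wg !mul1g.
have -> : cf (gam (g * h)%g (winv (wg (g * h)%g))) x = - cf (gam 1%g (wg (g * h)%g)) x.
  by rewrite -{1}(ev_wg (g * h)%g) gam_winv'.
by rewrite addrA.
Qed.

Lemma pair_hom1 g h : isB (fun x => (x == (g, h))%:R - cf (GamV (cnt (dec g h))) x
   + cf (gam 1%g (wg g)) x + cf (gam 1%g (wg h)) x - cf (gam 1%g (wg (g * h)%g)) x
   - (x == (1%g, 1%g))%:R).
Proof.
have [_ hall hf] := decP g h.
have A := gam_flat hall.
have Bc := gam_shift gen g 1%g (wg h).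
have Cc := isB_bnd3 [:: ((g, 1%g, 1%g), 1)].
eapply isB_ext; last exact: (isB_sub (isB_sub A Bc) Cc).
move=> x /=; rewrite cf_bnd3_1 -gam_fred hf gam_fred gam_yw !mulg1 !mul1g ev_wg; ring.
Qed.

Definition Nc (c : chain2 G) : 'rV[rat]_m := \sum_(p <- c) p.2 *: cnt (dec p.1.1 p.1.2).
Definition Ghat (b : chain1 G) : chain2 G := flatten [seq sc q.2 (gam 1%g (wg q.1)) | q <- b].
Definition aug (c : chain2 G) : rat := \sum_(p <- c) p.2.

Lemma cf_Ghat b x : cf (Ghat b) x = pr b (fun g => cf (gam 1%g (wg g)) x).
Proof. by rewrite /Ghat cf_flatten /pr; apply: eq_bigr => q _; rewrite cf_sc. Qed.

Lemma chain_hom (c : chain2 G) : isB (fun x => cf c x - cf (GamV (Nc c)) x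
   + cf (Ghat (bnd2 c)) x - aug c * (x == (1%g, 1%g))%:R).
Proof.
elim: c => [|[[g h] a] c IH].
  eapply isB_ext; last exact: isB0.
  move=> x /=; rewrite /Nc /aug !big_nil /Ghat /= !cf_nil cf_GamV big1 => [|j _]; last by rewrite mxE mul0r.
  by rewrite mul0r; ring.
eapply isB_ext; last exact: (isB_add IH (isB_scale a (pair_hom1 g h))).
move=> x /=; rewrite /Nc /aug !big_cons /= cf_GamV_add cf_GamV_scale cf_consI bnd2_cons /Ghat /= !cf_cat !cf_sc /=.
ring.
Qed.

Lemma cycle_hom (c : chain2 G) : is_cycle2 c -> isB (fun x => cf c x - cf (GamV (Nc c)) x).
Proof.
move=> hc.
have e1 : forall x, cf (Ghat (bnd2 c)) x = 0.
  move=> x; rewrite cf_Ghat (@pr_eq _ _ [::]) ?pr_nil // => g; rewrite cf_nil; exact: hc.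
have e2 : aug c = 0.
  have -> : aug c = pr (bnd2 c) (fun _ => 1).
    rewrite /aug; elim: c {hc e1} => [|t c IH]; first by rewrite big_nil /= pr_nil.
    by rewrite big_cons bnd2_cons pr_cat !pr_cons pr_nil IH; ring.
  by rewrite (@pr_eq _ _ [::]) ?pr_nil // => g; rewrite cf_nil; exact: hc.
eapply isB_ext; last exact: (chain_hom c).
by move=> x /=; rewrite e1 e2; ring.
Qed.

Definition dotv (a b : 'rV[rat]_m) : rat := \sum_(j < m) a 0 j * b 0 j.
Definition rv (phi : G -> G -> rat) : 'rV[rat]_m := \row_j pair2 phi (gam 1%g (Wj j)).
Definition phiu (u : 'rV[rat]_m) (g h : G) : rat := dotv (cnt (dec g h)) u.
Definition psiw (phi : G -> G -> rat) (g : G) : rat := phi 1%g 1%g - pair2 phi (gam 1%g (wg g)).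

Lemma dotvDl a b (z : 'rV[rat]_m) : dotv (a + b) z = dotv a z + dotv b z.
Proof. by rewrite /dotv -big_split; apply: eq_bigr => j _; rewrite mxE mulrDl. Qed.
Lemma dotvZl (r : rat) a (z : 'rV[rat]_m) : dotv (r *: a) z = r * dotv a z.
Proof. by rewrite /dotv big_distrr; apply: eq_bigr => j _; rewrite mxE -mulrA. Qed.
Lemma dotv0l (z : 'rV[rat]_m) : dotv 0 z = 0.
Proof. by rewrite /dotv big1 // => j _; rewrite mxE mul0r. Qed.
Lemma dotv_suml (I : Type) (s : seq I) (F : I -> 'rV[rat]_m) (z : 'rV[rat]_m) :
  dotv (\sum_(i <- s) F i) z = \sum_(i <- s) dotv (F i) z.
Proof.
elim: s => [|i s IH]; first by rewrite !big_nil dotv0l.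
by rewrite !big_cons dotvDl IH.
Qed.
Lemma dotvDr a (z z2 : 'rV[rat]_m) : dotv a (z + z2) = dotv a z + dotv a z2.
Proof. by rewrite /dotv -big_split; apply: eq_bigr => j _; rewrite mxE mulrDr. Qed.
Lemma dotvZr (r : rat) a (z : 'rV[rat]_m) : dotv a (r *: z) = r * dotv a z.
Proof. by rewrite /dotv big_distrr; apply: eq_bigr => j _; rewrite mxE mulrCA. Qed.

Lemma pr_flatten (T : eqType) (I : Type) (s : seq I) (F : I -> seq (T * rat)) P :
  pr (flatten [seq F i | i <- s]) P = \sum_(i <- s) pr (F i) P.
Proof.
elim: s => [|i s IH]; first by rewrite big_nil /= pr_nil.
by rewrite /= pr_cat IH big_cons.
Qed.

Lemma pair_GamV phi a : pair2 phi (GamV a) = dotv a (rv phi).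
Proof.
rewrite pair2E /GamV pr_flatten /dotv; apply: eq_bigr => j _.
by rewrite pr_sc mxE.
Qed.

Lemma cocycle_F1 phi g h : is_cocycle2 phi ->
  phi g h = phiu (rv phi) g h + cobnd1 (psiw phi) g h.
Proof.
move=> hc.
have H := pair_hom1 g h.
set c1 := ((g, h), 1) :: gam 1%g (wg g) ++ gam 1%g (wg h).
set c2 := GamV (cnt (dec g h)) ++ gam 1%g (wg (g * h)%g) ++ [:: ((1%g, 1%g), 1)].
have e := @pair_hom _ phi c1 c2 hc.
have : pair2 phi c1 = pair2 phi c2.
  apply: e; eapply isB_ext; last exact: H.
  move=> x /=; rewrite /c1 /c2 !cf_consI !cf_cat cf_consI cf_nil /=; ring.
rewrite !pair2E /c1 /c2 pr_cons !pr_cat pr_cons pr_nil -!pair2E pair_GamV /=.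
rewrite /phiu /cobnd1 /psiw => E; lra.
Qed.

Lemma cobnd_cocycle (chi : G -> rat) : is_cocycle2 (cobnd1 chi).
Proof. by move=> a b c; rewrite /cobnd1 mulgA; ring. Qed.

Lemma pair_cobnd (chi : G -> rat) (c : chain2 G) : pair2 (cobnd1 chi) c = pr (bnd2 c) chi.
Proof.
elim: c => [|[[a b] r] c IH]; first by rewrite pair2E !pr_nil.
by rewrite pair2E pr_cons -pair2E IH bnd2_cons pr_cat !pr_cons pr_nil /cobnd1 /=; ring.
Qed.

Lemma pair_cobnd_cycle (chi : G -> rat) (c : chain2 G) : is_cycle2 c -> pair2 (cobnd1 chi) c = 0.
Proof.
by move=> hc; rewrite pair_cobnd (@pr_eq _ _ [::]) ?pr_nil // => g; rewrite cf_nil; exact: hc.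
Qed.

Lemma pair_cycle phi c : is_cocycle2 phi -> is_cycle2 c ->
  pair2 phi c = dotv (Nc c) (rv phi).
Proof.
move=> hp hc; rewrite -pair_GamV; apply: pair_hom hp _; exact: cycle_hom.
Qed.

Lemma pair_phiu (z : 'rV[rat]_m) c : pair2 (phiu z) c = dotv (Nc c) z.
Proof.
rewrite /Nc dotv_suml pair2E /pr; apply: eq_bigr => p _.
by rewrite dotvZl.
Qed.

Lemma gam_terms (q : G) w t : t \in gam q w -> exists u, [/\ (size u <= size w)%N,
   t.1.1 = (q * ev u)%g, (exists s, t.1.2 = gen s) & `|t.2| = 1].
Proof.
elim: w q => [|a w IH] q //=.
rewrite inE => /orP[/eqP ->|ht].
  case: a => s [] /=; rewrite /gterm /=.
  - exists [:: (s, true)]; split; rewrite /= ?/xa /= ?mulg1 ?normrN ?normr1 //; by exists s.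
  - exists [::]; split; rewrite /= ?mulg1 ?normr1 //; by exists s.
have [u [su e1 e2 e3]] := IH _ ht.
by exists (a :: u); split => //; rewrite e1 ev_cons mulgA.
Qed.

Lemma L_gen s : (L (gen s) <= 1)%N.
Proof. by have := L_le [:: (s, false)]; rewrite ev_cons ev_nil mulg1 /xa. Qed.

Lemma pair_gam_bound phi Cp kp :
  (forall g h, `|phi g h| <= Cp * (1 + (L g + L h)%:R) ^+ kp) -> forall w,
  `|pair2 phi (gam 1%g w)| <= (size w)%:R * (Cp * (2 + (size w)%:R) ^+ kp).
Proof.
move=> hp w.
have C0 : 0 <= Cp.
  apply: (Cst_ge0 (x := (1 + (L 1%g + L 1%g)%:R) ^+ kp)) (hp 1%g 1%g).
  by apply: exprn_gt0; rewrite ltr_pwDl.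
rewrite pair2E /pr; apply: le_trans (ler_norm_sum _ _ _) _.
apply: le_trans (sum_le_size (M := Cp * (2 + (size w)%:R) ^+ kp) _) _; last by rewrite size_gam.
move=> t ht; have [u [su e1 [s e2] e3]] := gam_terms ht.
rewrite normrM e3 mul1r e1 e2 mul1g; apply: le_trans (hp _ _) _.
apply: (ler_wpM2l C0); apply: ler_expr; first by rewrite addr_ge0.
have hn : (L (ev u) + L (gen s) <= (size w).+1)%N.
  have := L_le u; have := L_gen s; lia.
have : ((L (ev u) + L (gen s))%:R <= ((size w).+1)%:R :> rat) by rewrite ler_nat.
rewrite -addn1 natrD; lra.
Qed.

Lemma psiw_growth phi : pgrowth2 L phi -> pgrowth1 L (psiw phi).
Proof.
move=> [Cp [kp hp]]; exists (`|phi 1%g 1%g| + Cp * 2 ^+ kp), kp.+1 => g.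
have C0 : 0 <= Cp.
  apply: (Cst_ge0 (x := (1 + (L 1%g + L 1%g)%:R) ^+ kp)) (hp 1%g 1%g).
  by apply: exprn_gt0; rewrite ltr_pwDl.
have n0 : 0 <= (L g)%:R :> rat := ler0n _ _.
set X := 1 + (L g)%:R.
have X1 : 1 <= X by rewrite lerDl.
have X0 : 0 <= X by apply: le_trans X1.
have hb := pair_gam_bound hp (wg g); rewrite size_wg in hb.
rewrite /psiw; apply: le_trans (ler_normB _ _) _.
have h1 : `|phi 1%g 1%g| <= `|phi 1%g 1%g| * X ^+ kp.+1.
  by rewrite -{1}(mulr1 `|phi 1%g 1%g|); apply: ler_wpM2l => //; apply: exprn_ege1.
have h2 : (2 + (L g)%:R) ^+ kp <= 2 ^+ kp * X ^+ kp.
  by rewrite -exprMn; apply: ler_expr; rewrite /X; lra.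
have h3 : (L g)%:R * (Cp * (2 + (L g)%:R) ^+ kp) <= X * (Cp * (2 ^+ kp * X ^+ kp)).
  apply: ler_pM => //; first by rewrite mulr_ge0 // exprn_ge0 // addr_ge0.
    by rewrite /X lerDr.
  by apply: ler_wpM2l.
have e : X * (Cp * (2 ^+ kp * X ^+ kp)) = Cp * 2 ^+ kp * X ^+ kp.+1 by rewrite exprS; ring.
rewrite mulrDl; apply: lerD => //; by rewrite -e; apply: le_trans hb h3.
Qed.

Definition Mz (z : 'rV[rat]_m) : rat := \sum_(j < m) `|z 0 j|.

Lemma dotv_bound (a z : 'rV[rat]_m) : (forall j, `|a 0 j| <= 1) -> `|dotv a z| <= Mz z.
Proof.
move=> ha; apply: le_trans (ler_norm_sum _ _ _) _; apply: ler_sum => j _.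
rewrite normrM -{2}(mul1r `|z 0 j|); apply: ler_wpM2r => //.
Qed.

Lemma dotv_cnt_bound l (z : 'rV[rat]_m) : `|dotv (cnt l) z| <= (size l)%:R * Mz z.
Proof.
rewrite /cnt dotv_suml; apply: le_trans (ler_norm_sum _ _ _) _.
apply: sum_le_size => p _; apply: dotv_bound => j.
rewrite /sgnv; case: ifP => _; rewrite ?mxE ?normrN ?mxE normr_nat; by case: (_ == _); rewrite /= ?ler01 ?lexx.
Qed.

Lemma Nb_bound g h : (Nb g h <= C * 2 ^ k * (1 + (L g + L h)) ^ k)%N.
Proof.
rewrite /Nb -mulnA -expnMn leq_mul2l; apply/orP; right; apply: leq_expl.
have := size_fred (yw g h); rewrite /LF /yw !size_cat size_winv !size_wg.
have := L_mul g h; lia.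
Qed.

Lemma phiu_growth (z : 'rV[rat]_m) : pgrowth2 L (phiu z).
Proof.
exists (Mz z * (C * 2 ^ k)%:R), k => g h.
have M0 : 0 <= Mz z by apply: sumr_ge0 => j _.
rewrite /phiu; apply: le_trans (dotv_cnt_bound _ _) _.
have [hs _ _] := decP g h.
have hle : (size (dec g h))%:R <= (C * 2 ^ k)%:R * (1 + (L g + L h)%:R) ^+ k :> rat.
  have e : (1 + (L g + L h)%:R) = ((1 + (L g + L h))%N)%:R :> rat.
    by rewrite !natrD mulr1n.
  by rewrite e -natrX -natrM ler_nat; apply: leq_trans hs (Nb_bound g h).
by rewrite mulrC -mulrA; apply: (ler_wpM2l M0).
Qed.

Lemma X_ge1 (n : nat) : 1 <= 1 + n%:R :> rat.
Proof. by rewrite lerDl. Qed.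

Lemma growth2_lin (a : rat) phi psi : pgrowth2 L phi -> pgrowth2 L psi ->
  pgrowth2 L (fun g h => a * phi g h + psi g h).
Proof.
move=> [C1 [k1 h1]] [C2 [k2 h2]]; exists (`|a| * C1 + C2), (k1 + k2)%N => g h.
set X := 1 + (L g + L h)%:R.
have X1 : 1 <= X := X_ge1 _.
have C10 : 0 <= C1 by apply: (Cst_ge0 (x := X ^+ k1)) (h1 g h); apply: exprn_gt0; apply: lt_le_trans X1.
have C20 : 0 <= C2 by apply: (Cst_ge0 (x := X ^+ k2)) (h2 g h); apply: exprn_gt0; apply: lt_le_trans X1.
apply: le_trans (ler_normD _ _) _; rewrite normrM mulrDl -mulrA; apply: lerD.
  apply: ler_wpM2l => //; apply: le_trans (h1 g h) _; apply: ler_wpM2l => //.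
  by apply: ler_expn => //; rewrite leq_addr.
apply: le_trans (h2 g h) _; apply: ler_wpM2l => //.
by apply: ler_expn => //; rewrite leq_addl.
Qed.

Lemma mono_bound (Cc : rat) kc (x y : nat) : 0 <= Cc -> (x <= y)%N ->
  Cc * (1 + x%:R) ^+ kc <= Cc * (1 + y%:R) ^+ kc.
Proof.
move=> C0 hxy; apply: ler_wpM2l => //; apply: ler_expr; first by apply: le_trans (X_ge1 _).
by rewrite lerD2l ler_nat.
Qed.

Lemma cobnd_growth chi : pgrowth1 L chi -> pgrowth2 L (cobnd1 chi).
Proof.
move=> [Cc [kc hc]]; exists (3 * Cc), kc => g h.
have C0 : 0 <= Cc by apply: (Cst_ge0 (x := (1 + (L g)%:R) ^+ kc)) (hc g); apply: exprn_gt0; apply: lt_le_trans (X_ge1 _).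
rewrite /cobnd1; apply: le_trans (ler_normD _ _) _; apply: le_trans (lerD (ler_normB _ _) (lexx _)) _.
have b1 := le_trans (hc h) (mono_bound kc C0 (leq_addl (L g) (L h))).
have b2 := le_trans (hc (g * h)%g) (mono_bound kc C0 (L_mul g h)).
have b3 := le_trans (hc g) (mono_bound kc C0 (leq_addr (L h) (L g))).
set Y := Cc * _ in b1 b2 b3; rewrite (_ : 3 * Cc * _ = Y + Y + Y); last by rewrite /Y; ring.
by apply: lerD => //; apply: lerD.
Qed.

Lemma growth1_add chi f M : pgrowth1 L chi -> (forall g, `|f g| <= M) ->
  pgrowth1 L (fun g => chi g + f g).
Proof.
move=> [Cc [kc hc]] hf; exists (Cc + M), kc => g.
have X1 := X_ge1 (L g).
have M0 : 0 <= M by apply: le_trans (hf g).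
apply: le_trans (ler_normD _ _) _; rewrite mulrDl; apply: lerD => //.
apply: le_trans (hf g) _; rewrite -{1}(mulr1 M); apply: ler_wpM2l => //; exact: exprn_ege1.
Qed.

Lemma growth2_bounded f M : (forall g, `|f g| <= M) -> pgrowth2 L (cobnd1 f).
Proof.
move=> hf; exists (3 * M), 0%N => g h; rewrite expr0 mulr1 /cobnd1.
apply: le_trans (ler_normD _ _) _; apply: le_trans (lerD (ler_normB _ _) (lexx _)) _.
have := hf h; have := hf (g * h)%g; have := hf g; lra.
Qed.

Lemma cocycle_lin (a : rat) phi psi : is_cocycle2 phi -> is_cocycle2 psi ->
  is_cocycle2 (fun g h => a * phi g h + psi g h).
Proof.
move=> h1 h2 x y z; have := h1 x y z; have := h2 x y z => e2 e1.
transitivity (a * (phi y z - phi (x * y)%g z + phi x (y * z)%g - phi x y) +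
  (psi y z - psi (x * y)%g z + psi x (y * z)%g - psi x y)); first by ring.
by rewrite e1 e2 mulr0 addr0.
Qed.

Lemma pcocycle_lin (a : rat) phi psi : pcocycle2 L phi -> pcocycle2 L psi ->
  pcocycle2 L (fun g h => a * phi g h + psi g h).
Proof. by move=> [g1 c1] [g2 c2]; split; [apply: growth2_lin | apply: cocycle_lin]. Qed.

Lemma pcob_pcoc phi : pcoboundary2 L phi -> pcocycle2 L phi.
Proof.
move=> [chi [hg he]].
have -> : phi = cobnd1 chi by apply: functional_extensionality => g; apply: functional_extensionality => h.
by split; [apply: cobnd_growth | apply: cobnd_cocycle].
Qed.

Lemma rv_lin (a : rat) phi psi : rv (fun g h => a * phi g h + psi g h) = a *: rv phi + rv psi.
Proof. by apply/matrixP => i j; rewrite !mxE !pair2E pr_lin. Qed.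

Definition Pg : seq G := undup [seq gen s | s <- enum S].
Lemma expc_keys w : {subset map fst (expc gen w) <= Pg}.
Proof.
move=> g; rewrite /expc -map_comp => /mapP [a _ ->] /=.
by rewrite mem_undup; apply: map_f; rewrite mem_enum.
Qed.

Definition Em : 'M[rat]_(m, size Pg) := \matrix_(j, t) cf (expc gen (Wj j)) (nth 1%g Pg t).

Lemma Wj_in (j : 'I_m) : Wj j \in W.
Proof. by apply: mem_nth. Qed.

Lemma cf_bnd2_sc (r : rat) (c : chain2 G) x : cf (bnd2 (sc r c)) x = r * cf (bnd2 c) x.
Proof.
elim: c => [|[[a b] q] c IH]; first by rewrite /= cf_nil mulr0.
rewrite /= bnd2_cons [in RHS]bnd2_cons !cf_cat IH /= !cf_consI cf_nil /=; ring.
Qed.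

Lemma bnd2_flatten (I : Type) (s : seq I) (F : I -> chain2 G) :
  bnd2 (flatten [seq F i | i <- s]) = flatten [seq bnd2 (F i) | i <- s].
Proof. by elim: s => [|i s IH] //=; rewrite bnd2_cat IH. Qed.

Lemma cf_bnd2_GamV a g : cf (bnd2 (GamV a)) g = \sum_(j < m) a 0 j * cf (expc gen (Wj j)) g.
Proof.
rewrite /GamV bnd2_flatten cf_flatten; apply: eq_bigr => j _.
by rewrite cf_bnd2_sc bnd_gam mul1g (rel_ev (Wj_in j)) addrNK.
Qed.

Lemma pair_cobnd_gam (f : G -> rat) (j : 'I_m) :
  pair2 (cobnd1 f) (gam 1%g (Wj j)) = pr (expc gen (Wj j)) f.
Proof.
rewrite pair_cobnd; apply: pr_eq => g.
by rewrite bnd_gam mul1g (rel_ev (Wj_in j)) addrNK.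
Qed.

Lemma F3 phi : pcocycle2 L phi -> (forall c, is_cycle2 c -> pair2 phi c = 0) ->
  pcoboundary2 L phi.
Proof.
move=> [pg pc] hz.
have [x hx] : exists x : 'cV[rat]_(size Pg), Em *m x = (rv phi)^T.
  apply: fredholm => a ha.
  have cyc : is_cycle2 (GamV a).
    move=> g; change (cf (bnd2 (GamV a)) g = 0); rewrite cf_bnd2_GamV.
    case: (boolP (g \in Pg)) => hg.
      have := congr1 (fun X : 'M[rat]_(1, size Pg) => X 0 (Ordinal (etrans (index_mem g Pg) hg))) ha.
      rewrite !mxE => e; rewrite -[RHS]e; apply: eq_bigr => j _; rewrite !mxE /= nth_index //.
    rewrite big1 // => j _; rewrite cf_notin ?mulr0 //.
    by apply/negP => /expc_keys; rewrite (negbTE hg).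
  have := hz _ cyc; rewrite pair_GamV => e.
  apply/matrixP => i i'; rewrite (ord1 i) (ord1 i') !mxE -[RHS]e /dotv.
  by apply: eq_bigr => j _; rewrite !mxE.
set f := fun g => \sum_(t < size Pg) (g == nth 1%g Pg t)%:R * x t 0.
have fP : forall t : 'I_(size Pg), f (nth 1%g Pg t) = x t 0.
  move=> t; rewrite /f (bigD1 t) //= eqxx mul1r big1 ?addr0 // => t' tt'.
  rewrite nth_uniq ?undup_uniq ?ltn_ord //.
  by rewrite -[(val t == val t')]/(t == t') eq_sym (negbTE tt') mul0r.
have hf : forall g, `|f g| <= \sum_(t < size Pg) `|x t 0|.
  move=> g; apply: le_trans (ler_norm_sum _ _ _) _; apply: ler_sum => t _.
  rewrite normrM normr_nat -{2}(mul1r `|x t 0|); apply: ler_wpM2r => //.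
  by case: (_ == _); rewrite /= ?ler01 ?lexx.
have rvf : rv (cobnd1 f) = rv phi.
  apply/matrixP => i j; rewrite (ord1 i) mxE pair_cobnd_gam.
  have := congr1 (fun X : 'cV[rat]_m => X j 0) hx; rewrite !mxE => <-.
  rewrite (@pr_coef _ _ Pg) ?undup_uniq //; last exact: expc_keys.
  rewrite (big_nth 1%g) big_mkord; apply: eq_bigr => t _.
  by rewrite mxE fP.
set phi' := fun g h => (-1) * cobnd1 f g h + phi g h.
have pp' : pcocycle2 L phi'.
  apply: pcocycle_lin => //; split; [exact: growth2_bounded hf | exact: cobnd_cocycle].
have rv0 : rv phi' = 0 by rewrite rv_lin rvf scaleN1r addNr.
exists (fun g => psiw phi' g + f g); split.
  by apply: growth1_add hf; apply: psiw_growth; case: pp'.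
move=> g h; have := cocycle_F1 g h pp'.2; rewrite rv0 /phiu /dotv big1 => [|j _]; last by rewrite mxE mulr0.
rewrite /phi' /cobnd1 add0r => e; lra.
Qed.

Lemma dotv_dotr a b : dotv a b = dotr a b.
Proof. by rewrite dotrE. Qed.

Lemma cf_GamV0 x : cf (GamV 0) x = 0.
Proof. by rewrite cf_GamV big1 // => j _; rewrite mxE mul0r. Qed.

Lemma bnd3_cycle (g h g3 : G) : is_cycle2 (bnd3 [:: ((g, h, g3), 1)]).
Proof.
move=> x; change (cf (bnd2 (bnd3 [:: ((g, h, g3), 1)])) x = 0).
rewrite /bnd3 /= !bnd2_cons bnd2_nil /= ?cats0 !cf_consI cf_nil /= -!mulgA; ring.
Qed.

Lemma Nc_cat c1 c2 : Nc (c1 ++ c2) = Nc c1 + Nc c2.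
Proof. by rewrite /Nc big_cat. Qed.
Lemma Nc_sc (a : rat) c : Nc (sc a c) = a *: Nc c.
Proof.
rewrite /Nc /sc big_map scaler_sumr; apply: eq_bigr => p _ /=; by rewrite scalerA.
Qed.

Lemma inj_part c : is_cycle2 c -> (forall phi, pcocycle2 L phi -> pair2 phi c = 0) ->
  is_boundary2 c.
Proof.
move=> hcyc hz.
set Bp := fun a : 'rV[rat]_m => isB (fun x => cf (GamV a) x).
have sB : subsp Bp.
  split; first by eapply isB_ext; last exact: isB0; move=> x; rewrite cf_GamV0.
  move=> a v1 w1 hv hw; eapply isB_ext; last exact: (isB_add (isB_scale a hv) hw).
  by move=> x /=; rewrite cf_GamV_add cf_GamV_scale.
have hc := cycle_hom hcyc.
case: (classic (Bp (Nc c))) => hB.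
  have [d hd] : isB (fun x => cf c x).
    eapply isB_ext; last exact: (isB_add hc hB).
    by move=> x /=; rewrite subrK.
  by exists d.
have [u [hu hnz]] := sep sB hB.
have pu : pcocycle2 L (phiu u).
  split; first exact: phiu_growth.
  move=> g h g3.
  set t := bnd3 [:: ((g, h, g3), 1)].
  have Bt : Bp (Nc t).
    have := cycle_hom (bnd3_cycle g h g3); rewrite -/t => ht.
    eapply isB_ext; last exact: (isB_sub (isB_bnd3 [:: ((g, h, g3), 1)]) ht).
    by move=> x /=; rewrite -/t; ring.
  have := hu _ Bt; rewrite -dotv_dotr /t /Nc /bnd3 /= !big_cons big_nil /=.
  rewrite !dotvDl !dotvZl dotv0l /phiu => e; rewrite -[RHS]e; ring.
have := hz _ pu; rewrite pair_phiu dotv_dotr => e.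
by rewrite e eqxx in hnz.
Qed.

Lemma phiu_rv phi : is_cocycle2 phi ->
  phiu (rv phi) = (fun g h => (-1) * cobnd1 (psiw phi) g h + phi g h).
Proof.
move=> hc; apply: functional_extensionality => g; apply: functional_extensionality => h.
by rewrite (cocycle_F1 g h hc); ring.
Qed.

Lemma surj_part Lam : PH2_functional L Lam ->
  exists c : chain2 G, is_cycle2 c /\ forall phi, pcocycle2 L phi -> Lam phi = pair2 phi c.
Proof.
move=> [hlin hcob].
set U := fun v : 'rV[rat]_m => exists phi, pcocycle2 L phi /\ rv phi = v.
set NZ := fun x : 'rV[rat]_m => exists c, is_cycle2 c /\ Nc c = x.
set lam := fun v : 'rV[rat]_m => Lam (phiu v).
have pc0 : pcocycle2 L (fun _ _ => 0).
  split; last by move=> ? ? ?; rewrite !(subr0, addr0).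
  by exists 0, 0%N => g h; rewrite normr0 mul0r.
have sU : subsp U.
  split.
    exists (fun _ _ => 0); split => //; apply/matrixP => i j.
    by rewrite !mxE pair2E /pr big1 // => p _; rewrite mulr0.
  move=> a v w [p1 [h1 <-]] [p2 [h2 <-]].
  by exists (fun g h => a * p1 g h + p2 g h); split; [exact: pcocycle_lin | exact: rv_lin].
have sN : subsp NZ.
  split.
    by exists [::]; split; [move=> g; exact: cf_nil | rewrite /Nc big_nil].
  move=> a v w [c1 [h1 <-]] [c2 [h2 <-]].
  exists (sc a c1 ++ c2); split; last by rewrite Nc_cat Nc_sc.
  move=> g; change (cf (bnd2 (sc a c1 ++ c2)) g = 0).
  rewrite bnd2_cat cf_cat cf_bnd2_sc.
  have e1 : cf (bnd2 c1) g = 0 by exact: h1.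
  have e2 : cf (bnd2 c2) g = 0 by exact: h2.
  by rewrite e1 e2 mulr0 addr0.
have pcU : forall phi, pcocycle2 L phi ->
    pcocycle2 L (phiu (rv phi)) /\ Lam phi = lam (rv phi).
  move=> phi hp.
  have pcb : pcocycle2 L (cobnd1 (psiw phi)).
    apply: pcob_pcoc; exists (psiw phi); split => //; apply: psiw_growth; exact: hp.1.
  have pu : pcocycle2 L (phiu (rv phi)) by rewrite phiu_rv; [exact: pcocycle_lin | exact: hp.2].
  split => //.
  have e := hlin 1 _ _ pu pcb.
  have ephi : (fun g h => 1 * phiu (rv phi) g h + cobnd1 (psiw phi) g h) = phi.
    apply: functional_extensionality => g; apply: functional_extensionality => h.
    by rewrite (cocycle_F1 g h hp.2) mul1r.
  rewrite ephi in e; rewrite e (hcob (cobnd1 (psiw phi))) ?mul1r ?addr0 //.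
  by exists (psiw phi); split => //; apply: psiw_growth; exact: hp.1.
have hlam : forall (a : rat) (v w : 'rV[rat]_m), U v -> U w -> lam (a *: v + w) = a * lam v + lam w.
  move=> a v w [p1 [h1 <-]] [p2 [h2 <-]].
  have [q1 _] := pcU _ h1; have [q2 _] := pcU _ h2.
  rewrite /lam -(hlin a _ _ q1 q2); congr (Lam _).
  apply: functional_extensionality => g; apply: functional_extensionality => h.
  by rewrite /phiu dotvDr dotvZr.
have hker : forall v : 'rV[rat]_m, U v -> (forall x, NZ x -> dotr x v = 0) -> lam v = 0.
  move=> v [phi [hp <-]] hx.
  have [_ <-] := pcU _ hp.
  apply: hcob; apply: F3 => // c hc.
  rewrite pair_cycle //; last exact: hp.2.
  by rewrite dotv_dotr; apply: hx; exists c.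
have [x [[c [hc <-]] hrep]] := rep sU sN hlam hker.
exists c; split => // phi hp.
have [_ ->] := pcU _ hp.
by rewrite hrep; [rewrite pair_cycle ?dotv_dotr //; exact: hp.2 | exists phi].
Qed.
End Pres.


Theorem theorem2p1p3 (S : finType) (W : seq (word S)) (G : groupType)
  (gen : S -> G) (L : G -> nat) :
  presents gen W -> dehn_poly_bounded W -> is_std_length gen L ->
  alpha2_iso L.
Proof.
move=> hp [C0 [k0 hd]] hs; split.
- by move=> c hc hz; apply: (inj_part hp hs hd).
- by move=> Lam hL; apply: (surj_part hp hs hd).
Qed.
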